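(* Let $\mathcal{M}=\langle S,\iota,\mathsf{Act},P,\mathsf{Z},\mathsf{obs}\rangle$ be an MDP. For every trace $\tau\in\mathsf{Z}^+$ and every state-risk function $r\colon S\to\mathbb{R}_{\ge0}$: $R_r(\tau)=\max_{\mathsf{bel}\in V(\mathsf{est}_{\mathsf{MDP}}(\tau))}\sum_{s\in S}\mathsf{bel}(s)\cdot r(s)$.
   Context: An MDP is a tuple $\langle S,\iota,\mathsf{Act},P,\mathsf{Z},\mathsf{obs}\rangle$: finite state set $S$, initial distribution $\iota\in\mathsf{Distr}(S)$, finite action set $\mathsf{Act}$, partial transition function $P\colon S\times\mathsf{Act}\rightharpoonup\mathsf{Distr}(S)$ (write $P(s,\alpha,s')=P(s,\alpha)(s')$), finite observation set $\mathsf{Z}$, observation function $\mathsf{obs}\colon S\to\mathsf{Distr}(\mathsf{Z})$; $\mathsf{AvAct}(s)=\{\alpha\mid P(s,\alpha)\text{ defined}\}\neq\emptyset$. A finite path is $\pi=s_0a_0\dots a_{n-1}s_n$ with $\iota(s_0)>0$, $P(s_i,a_i)(s_{i+1})>0$; $\mathrm{last}(\pi)=s_n$. A scheduler $\sigma$ maps each finite path $\pi$ to a distribution on $\mathsf{AvAct}(\mathrm{last}(\pi))$; $\Sigma$ is the set of schedulers; $\Pr^\sigma(\pi)=\iota(s_0)\prod_{i<n}\sigma(s_0a_0\dots s_i)(a_i)P(s_i,a_i)(s_{i+1})$. For a trace $\tau=z_0\dots z_n$ and path $\pi=s_0\dots s_m$, $\Pr(\tau\mid\pi)=\prod_{i=0}^n\mathsf{obs}(s_i)(z_i)$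 if $m=n$, else $0$; $\mathrm{Paths}(\tau)$ are the paths with as many states as $\tau$ has observations; $\Pr^\sigma(\tau)=\sum_\pi\Pr^\sigma(\pi)\Pr(\tau\mid\pi)$; $\Pr^\sigma(\pi\mid\tau)=\Pr(\tau\mid\pi)\Pr^\sigma(\pi)/\Pr^\sigma(\tau)$ with $0/0=0$. $R_r(\tau)=\sup_{\sigma\in\Sigma}\sum_{\pi\in\mathrm{Paths}(\tau)}\Pr^\sigma(\pi\mid\tau)r(\mathrm{last}(\pi))$. Beliefs: $\mathsf{Bel}=\mathsf{Distr}(S)\cup\{\mathbf{0}\}$, viewed as vectors in $\mathbb{R}^S$. $\mathsf{est}_{\mathsf{MDP}}(z)=\{b_z\}$ with $b_z(s)=\iota(s)\mathsf{obs}(s)(z)/\sum_{\hat s}\iota(\hat s)\mathsf{obs}(\hat s)(z)$ (or $\mathbf{0}$ if the denominator vanishes), and $\mathsf{est}_{\mathsf{MDP}}(\tau\cdot z)=\bigcup_{\mathsf{bel}\in\mathsf{est}_{\mathsf{MDP}}(\tau)}\mathsf{est}^{\mathsf{up}}(\mathsf{bel},z)$, where $\mathsf{bel}'\in\mathsf{est}^{\mathsf{up}}(\mathsf{bel},z)$ iff there is $\varsigma\colon S\to\mathsf{Distr}(\mathsf{Act})$ with $\varsigma(s)$ supported in $\mathsf{AvAct}(s)$ and $\mathsf{bel}'(s')=\dfrac{\sum_s\mathsf{bel}(s)\sum_\alpha\varsigma(s)(\alpha)P(s,\alpha,s')\mathsf{obs}(s')(z)}{\sum_s\mathsf{bel}(s)\sum_\alpha\varsigma(s)(\alpha)\sum_{\hat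 s}P(s,\alpha,\hat s)\mathsf{obs}(\hat s)(z)}$ for all $s'$ ($0/0=0$). For $B\subseteq\mathsf{Bel}$, a belief in $B$ is interior if it is a convex combination of beliefs in $B\setminus\{\mathsf{bel}\}$; $V(B)\subseteq B$ is the set of non-interior elements (vertices of the convex hull of $B$). *)

(* Defs.v *)
From HB Require Import structures.
From mathcomp Require Import all_boot all_order all_algebra.
From mathcomp Require Import boolp classical_sets reals.
Set Implicit Arguments. Unset Strict Implicit. Unset Printing Implicit Defensive.
Import Order.TTheory GRing.Theory Num.Theory.
Local Open Scope ring_scope.
Local Open Scope classical_set_scope.

Section MDPDefs.
Variables (R : realType) (S Act Z : finType).

Definition is_distr (X : finType) (f : X -> R) : Prop :=
  (forall x, 0 <= f x) /\ \sum_(x : X) f x = 1.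

(* The partial transition function is
   encoded by a domain predicate [avail] together with a total function [trans];
   the values [trans s a] for [~~ avail s a] are irrelevant (never used). *)
Record MDP := {
  iota : S -> R;
  avail : S -> Act -> bool;
  trans : S -> Act -> S -> R;
  obs : S -> Z -> R;
  iota_distr : is_distr iota;
  trans_distr : forall s a, avail s a -> is_distr (trans s a);
  obs_distr : forall s, is_distr (obs s);
  avail_nonempty : forall s, exists a, avail s a
}.

Variable M : MDP.

(* A finite path s0 a0 s1 ... a_{n-1} s_n is represented by its first state s0
   and the sequence of steps [(a0,s1); ...; (a_{n-1},s_n)]. *)
Definition path_last (s0 : S) (steps : seq (Act * S)) : S :=
  last s0 (map snd steps).

Fixpoint steps_ok (cur : S) (steps : seq (Act * S)) : bool :=
  match steps with
  | [::] => true
  | (a, s') :: rest => avail M cur a && (0 < trans M cur a s') && steps_ok s' rest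
  end.

Definition is_path (s0 : S) (steps : seq (Act * S)) : bool :=
  (0 < iota M s0) && steps_ok s0 steps.

(* A scheduler maps each finite path (s0, steps) to a distribution on the
   available actions of its last state. (It is also given values on non-paths,
   which never influence any probability below.) *)
Definition scheduler := S -> seq (Act * S) -> Act -> R.

Definition is_scheduler (sigma : scheduler) : Prop :=
  forall s0 steps, is_distr (sigma s0 steps) /\
    forall a, ~~ avail M (path_last s0 steps) a -> sigma s0 steps a = 0.

Fixpoint path_prob_aux (sigma : scheduler) (s0 : S) (pre : seq (Act * S))
    (cur : S) (rest : seq (Act * S)) : R :=
  match rest with
  | [::] => 1
  | (a, s') :: rest' =>
      sigma s0 pre a * trans M cur a s' *
      path_prob_aux sigma s0 (rcons pre (a, s')) s' rest'
  end.

Definition path_prob (sigma : scheduler) (s0 : S) (steps : seq (Act * S)) : R :=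
  iota M s0 * path_prob_aux sigma s0 [::] s0 steps.

Definition trace_given_path (z0 : Z) (zs : seq Z) (s0 : S)
    (steps : seq (Act * S)) : R :=
  if size steps == size zs then
    obs M s0 z0 * \prod_(p <- zip (map snd steps) zs) obs M p.1 p.2
  else 0.

(* Pr^sigma(tau): sum over Paths(tau) (paths with as many states as tau has
   observations, i.e. size zs steps). *)
Definition trace_prob (sigma : scheduler) (z0 : Z) (zs : seq Z) : R :=
  \sum_(s0 : S) \sum_(t : (size zs).-tuple (Act * S) | is_path s0 t)
    path_prob sigma s0 t * trace_given_path z0 zs s0 t.

(* Pr^sigma(pi | tau), with 0/0 = 0 (MathComp's x / 0 = 0) *)
Definition path_given_trace (sigma : scheduler) (z0 : Z) (zs : seq Z)
    (s0 : S) (steps : seq (Act * S)) : R :=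
  trace_given_path z0 zs s0 steps * path_prob sigma s0 steps
  / trace_prob sigma z0 zs.

Definition sched_risk (r : S -> R) (sigma : scheduler) (z0 : Z) (zs : seq Z) : R :=
  \sum_(s0 : S) \sum_(t : (size zs).-tuple (Act * S) | is_path s0 t)
    path_given_trace sigma z0 zs s0 t * r (path_last s0 t).

Definition risk (r : S -> R) (z0 : Z) (zs : seq Z) : R :=
  sup [set x | exists sigma, is_scheduler sigma /\ x = sched_risk r sigma z0 zs].

Local Notation belief := {ffun S -> R}.

Definition init_belief (z : Z) : belief :=
  let den := \sum_(s : S) iota M s * obs M s z in
  if den == 0 then 0 else [ffun s => iota M s * obs M s z / den].

Definition est_up (bel : belief) (z : Z) : set belief :=
  [set bel' | exists varsigma : S -> Act -> R,
    (forall s, is_distr (varsigma s) /\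
               forall a, ~~ avail M s a -> varsigma s a = 0) /\
    bel' = [ffun s' =>
      (\sum_(s : S) bel s * \sum_(a : Act) varsigma s a * trans M s a s' * obs M s' z)
      / (\sum_(s : S) bel s * \sum_(a : Act) varsigma s a *
           \sum_(sh : S) trans M s a sh * obs M sh z)]].

Definition est (z0 : Z) (zs : seq Z) : set belief :=
  foldl (fun B z => \bigcup_(b in B) est_up b z) [set init_belief z0] zs.

Definition interior_in (B : set belief) (bel : belief) : Prop :=
  exists (n : nat) (w : 'I_n -> R) (c : 'I_n -> belief),
    (forall i, 0 <= w i) /\ \sum_(i < n) w i = 1 /\
    (forall i, B (c i) /\ c i <> bel) /\
    (forall s, bel s = \sum_(i < n) w i * c i s).

Definition vertices (B : set belief) : set belief :=
  [set bel | B bel /\ ~ interior_in B bel].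

Definition belief_risk (r : S -> R) (bel : belief) : R :=
  \sum_(s : S) bel s * r s.

End MDPDefs.

(* Main.v *)
Require Import Defs.
From HB Require Import structures.
From mathcomp Require Import all_boot all_order all_algebra.
From mathcomp Require Import boolp classical_sets reals.
From mathcomp Require Import ring.
Set Implicit Arguments. Unset Strict Implicit. Unset Printing Implicit Defensive.
Import Order.TTheory GRing.Theory Num.Theory.
Local Open Scope ring_scope.

Section P.
Variables (R : realType) (S Act Z : finType) (M : MDP R S Act Z).
Local Notation belief := {ffun S -> R}.

Definition valid_vs (vs : S -> Act -> R) :=
  forall s, is_distr (vs s) /\ forall a, ~~ avail M s a -> vs s a = 0.

Definition stepN (b : belief) (vs : S -> Act -> R) (z : Z) : belief :=
  [ffun s' => \sum_(s : S) b s * \sum_(a : Act) vs s a * trans M s a s' * obs M s' z].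

Definition normalize (x : belief) : belief := [ffun s => x s / \sum_(u : S) x u].

Definition scl (k : R) (y : belief) : belief := [ffun s => k * y s].

Definition nonneg (x : belief) := forall s, 0 <= x s.

Lemma obs_ge0 s z : 0 <= obs M s z.
Proof. by case: (obs_distr M s) => H _; apply: H. Qed.

Lemma vsT_ge0 vs s a s' : valid_vs vs -> 0 <= vs s a * trans M s a s'.
Proof.
move=> Hv; case: (Hv s) => [[H0 _] Hn].
case Ha: (avail M s a).
  by apply: mulr_ge0 => //; case: (trans_distr Ha) => H _; apply: H.
by rewrite Hn ?Ha // mul0r.
Qed.

Lemma stepN_ge0 b vs z : nonneg b -> valid_vs vs -> nonneg (stepN b vs z).
Proof.
move=> Hb Hv s'; rewrite ffunE; apply: sumr_ge0 => s _; apply: mulr_ge0 => //.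
apply: sumr_ge0 => a _; apply: mulr_ge0; [exact: vsT_ge0 | exact: obs_ge0].
Qed.

Lemma sum_ge0 (x : belief) : nonneg x -> 0 <= \sum_s x s.
Proof. by move=> H; apply: sumr_ge0. Qed.

Lemma normalize_ge0 x : nonneg x -> nonneg (normalize x).
Proof. by move=> H s; rewrite ffunE divr_ge0 //; apply: sum_ge0. Qed.

Lemma nonneg_sum0 (x : belief) : nonneg x -> \sum_s x s = 0 -> x = 0.
Proof.
move=> H /eqP; rewrite psumr_eq0 // => /allP Hall.
by apply/ffunP => s; rewrite ffunE; apply/eqP; apply: Hall; rewrite mem_index_enum.
Qed.

Lemma normalize0 : normalize 0 = 0.
Proof. by apply/ffunP => s; rewrite !ffunE mul0r. Qed.

Lemma normalize_sum x : nonneg x -> normalize x = 0 \/ \sum_s normalize x s = 1.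
Proof.
move=> H; have [E|E] := eqVneq (\sum_s x s) 0.
  by left; rewrite (nonneg_sum0 H E) normalize0.
right; under eq_bigr do rewrite ffunE.
by rewrite -mulr_suml mulfV.
Qed.

Lemma normalizeZ (k : R) (y : belief) : k != 0 -> normalize (scl k y) = normalize y.
Proof.
move=> Hk; apply/ffunP => s; rewrite !ffunE.
under eq_bigr do rewrite ffunE.
rewrite -mulr_sumr.
have [E|E] := eqVneq (\sum_u y u) 0; first by rewrite E mulr0 !invr0 !mulr0.
by rewrite invfM mulrACA mulfV // mul1r.
Qed.

Lemma stepNZ k b vs z : stepN (scl k b) vs z = scl k (stepN b vs z).
Proof.
apply/ffunP => s'; rewrite !ffunE mulr_sumr; apply: eq_bigr => s _.
by rewrite ffunE mulrA.
Qed.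

Lemma stepN0 vs z : stepN 0 vs z = 0.
Proof. by apply/ffunP => s'; rewrite !ffunE big1 // => s _; rewrite ffunE mul0r. Qed.

Lemma normalize_stepN x vs z : nonneg x ->
  normalize (stepN (normalize x) vs z) = normalize (stepN x vs z).
Proof.
move=> H; have [E|E] := eqVneq (\sum_s x s) 0.
  by rewrite (nonneg_sum0 H E) normalize0.
have -> : normalize x = scl (\sum_s x s)^-1 x.
  by apply/ffunP => s; rewrite !ffunE mulrC.
by rewrite stepNZ normalizeZ // invr_eq0.
Qed.

Lemma den_eq (b : belief) vs z :
  \sum_(s : S) b s * \sum_(a : Act) vs s a * \sum_(sh : S) trans M s a sh * obs M sh z
  = \sum_(s' : S) stepN b vs z s'.
Proof.
under [RHS]eq_bigr do rewrite ffunE.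
rewrite exchange_big /=; apply: eq_bigr => s _.
rewrite -mulr_sumr; congr (_ * _).
rewrite exchange_big /=; apply: eq_bigr => a _.
by rewrite mulr_sumr; apply: eq_bigr => sh _; rewrite mulrA.
Qed.

Lemma est_up_eq b z bel' : est_up M b z bel' <->
  exists vs, valid_vs vs /\ bel' = normalize (stepN b vs z).
Proof.
split.
  case=> vs [Hv ->]; exists vs; split => //.
  by apply/ffunP => s'; rewrite !ffunE den_eq.
case=> vs [Hv ->]; exists vs; split => //.
by apply/ffunP => s'; rewrite !ffunE den_eq.
Qed.

Variable z0 : Z.

Definition x0 : belief := [ffun s => Defs.iota M s * obs M s z0].

Lemma init_normalize : init_belief M z0 = normalize x0.
Proof.
rewrite /init_belief.
have -> : \sum_(s : S) Defs.iota M s * obs M s z0 = \sum_s x0 s.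
  by apply: eq_bigr => s _; rewrite ffunE.
case: eqP => E; apply/ffunP => s; rewrite !ffunE.
  by rewrite E invr0 mulr0.
by [].
Qed.

Lemma est_nil b : est M z0 [::] b <-> b = normalize x0.
Proof. by rewrite /est /= -init_normalize. Qed.

Lemma est_rcons zs z b : est M z0 (rcons zs z) b <->
  exists b', est M z0 zs b' /\ est_up M b' z b.
Proof.
rewrite /est foldl_rcons; split; first by case=> b' H1 H2; exists b'.
by case=> b' [H1 H2]; exists b'.
Qed.

Lemma x0_ge0 : nonneg x0.
Proof.
move=> s; rewrite ffunE mulr_ge0 ?obs_ge0 //.
by case: (iota_distr M) => H _; apply: H.
Qed.

Lemma est_inv zs b : est M z0 zs b -> nonneg b /\ (b = 0 \/ \sum_s b s = 1).
Proof.
elim/last_ind: zs b => [|zs z IH] b.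
  by move/est_nil => ->; split; [apply: normalize_ge0; apply: x0_ge0 | apply: normalize_sum; apply: x0_ge0].
case/est_rcons => b' [/IH [Hb' _] /est_up_eq [vs [Hv ->]]].
have H := stepN_ge0 z Hb' Hv.
by split; [apply: normalize_ge0 | apply: normalize_sum].
Qed.


Definition sumT n (F : seq (Act * S) -> R) := \sum_(t : n.-tuple (Act * S)) F t.

Lemma eq_sumT n F G : (forall t, size t = n -> F t = G t) -> sumT n F = sumT n G.
Proof. by move=> H; apply: eq_bigr => t _; apply: H; rewrite size_tuple. Qed.

Lemma sumT0 F : sumT 0 F = F [::].
Proof.
rewrite /sumT (big_pred1 [tuple]) // => t /=.
by rewrite (tuple0 t); apply/esym/eqP.
Qed.

Lemma sumT_cons n F : sumT n.+1 F = \sum_(x : Act * S) sumT n (fun t => F (x :: t)).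
Proof.
rewrite /sumT pair_big /=.
rewrite (reindex (fun p : (Act * S) * n.-tuple (Act * S) => [tuple of p.1 :: p.2])) //=.
exists (fun t : n.+1.-tuple (Act * S) => (thead t, [tuple of behead t])).
  by move=> [x t] _ /=; rewrite theadE; congr (_, _); apply: val_inj.
by move=> t _ /=; rewrite [in RHS](tuple_eta t).
Qed.

Lemma sumT_S n F : sumT n.+1 F = sumT n (fun t => \sum_(x : Act * S) F (rcons t x)).
Proof.
elim: n F => [|n IH] F.
  by rewrite sumT_cons sumT0; apply: eq_bigr => x _; rewrite sumT0.
rewrite sumT_cons sumT_cons.
under eq_bigr do rewrite IH.
rewrite /sumT exchange_big /=; apply: eq_bigr => t _.
by rewrite exchange_big.
Qed.

Lemma steps_ok_rcons (cur : S) (t : seq (Act * S)) a x : steps_ok M cur (rcons t (a, x)) =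
  steps_ok M cur t && avail M (path_last cur t) a && (0 < trans M (path_last cur t) a x).
Proof.
elim: t cur => [|[a' x'] t IH] cur /=; first by rewrite andbT.
by rewrite IH !andbA.
Qed.

Lemma path_last_rcons (s0 : S) (t : seq (Act * S)) p : path_last s0 (rcons t p) = p.2.
Proof. by rewrite /path_last map_rcons last_rcons. Qed.

Lemma is_path_rcons (s0 : S) (t : seq (Act * S)) a x : is_path M s0 (rcons t (a, x)) =
  is_path M s0 t && avail M (path_last s0 t) a && (0 < trans M (path_last s0 t) a x).
Proof. by rewrite /is_path steps_ok_rcons !andbA. Qed.

Lemma aux_rcons sg (s0 : S) pre (cur : S) (t : seq (Act * S)) a x :
  path_prob_aux M sg s0 pre cur (rcons t (a, x)) =
  path_prob_aux M sg s0 pre cur t * (sg s0 (pre ++ t) a * trans M (path_last cur t) a x).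
Proof.
elim: t pre cur => [|[a' x'] t IH] pre cur /=.
  by rewrite cats0 mulr1 mul1r.
by rewrite IH cat_rcons !mulrA.
Qed.

Lemma path_prob_rcons sg (s0 : S) (t : seq (Act * S)) a x :
  path_prob M sg s0 (rcons t (a, x)) =
  path_prob M sg s0 t * (sg s0 t a * trans M (path_last s0 t) a x).
Proof. by rewrite /path_prob aux_rcons mulrA. Qed.

Lemma tgp_rcons zs z (s0 : S) (t : seq (Act * S)) a x : size t = size zs ->
  trace_given_path M z0 (rcons zs z) s0 (rcons t (a, x)) =
  trace_given_path M z0 zs s0 t * obs M x z.
Proof.
move=> Hs; rewrite /trace_given_path !size_rcons eqSS Hs eqxx.
rewrite map_rcons zip_rcons ?size_map //.
by rewrite -cats1 big_cat big_seq1 /= mulrA.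
Qed.


Lemma trans_ge0 s a x : avail M s a -> 0 <= trans M s a x.
Proof. by move=> H; case: (trans_distr H) => H0 _; apply: H0. Qed.

Lemma sg_ge0 sg s0 t a : is_scheduler M sg -> 0 <= sg s0 t a.
Proof. by move=> H; case: (H s0 t) => [[H0 _] _]; apply: H0. Qed.

Lemma aux_ge0 sg s0 pre (cur : S) t : is_scheduler M sg -> steps_ok M cur t ->
  0 <= path_prob_aux M sg s0 pre cur t.
Proof.
move=> Hs; elim: t pre cur => [|[a x] t IH] pre cur //=.
case/andP => /andP [Ha Hp] Ht.
by rewrite !mulr_ge0 ?sg_ge0 ?IH // ltW.
Qed.

Lemma path_prob_ge0 sg s0 t : is_scheduler M sg -> is_path M s0 t -> 0 <= path_prob M sg s0 t.
Proof.
by move=> Hs /andP [Hi Ht]; rewrite /path_prob mulr_ge0 ?(ltW Hi) ?aux_ge0.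
Qed.

Lemma tgp_ge0 zs s0 t : 0 <= trace_given_path M z0 zs s0 t.
Proof.
rewrite /trace_given_path; case: ifP => // _.
by rewrite mulr_ge0 ?obs_ge0 // prodr_ge0 // => p _; apply: obs_ge0.
Qed.

Definition wp sg zs (s0 : S) (t : seq (Act * S)) :=
  path_prob M sg s0 t * trace_given_path M z0 zs s0 t.

Lemma wp_ge0 sg zs s0 t : is_scheduler M sg -> is_path M s0 t -> 0 <= wp sg zs s0 t.
Proof. by move=> Hs Hp; rewrite /wp mulr_ge0 ?path_prob_ge0 ?tgp_ge0. Qed.

Definition fwd sg zs : belief := [ffun s' => \sum_(s0 : S) sumT (size zs) (fun t =>
  if is_path M s0 t && (path_last s0 t == s') then wp sg zs s0 t else 0)].

Definition W sg zs (s : S) (a : Act) := \sum_(s0 : S) sumT (size zs) (fun t =>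
  if is_path M s0 t && (path_last s0 t == s) then wp sg zs s0 t * sg s0 t a else 0).

Lemma fwd_rcons sg zs z s' : is_scheduler M sg ->
  fwd sg (rcons zs z) s' = \sum_(s : S) \sum_(a : Act) W sg zs s a * trans M s a s' * obs M s' z.
Proof.
move=> Hs.
have key : forall s0 (t : seq (Act * S)), size t = size zs ->
  \sum_(p : Act * S) (if is_path M s0 (rcons t p) && (path_last s0 (rcons t p) == s')
     then wp sg (rcons zs z) s0 (rcons t p) else 0)
  = \sum_(s : S) \sum_(a : Act) (if is_path M s0 t && (path_last s0 t == s)
     then wp sg zs s0 t * sg s0 t a else 0) * trans M s a s' * obs M s' z.
  move=> s0 t Ht.
  transitivity (\sum_(a : Act) \sum_(x : S) (if is_path M s0 (rcons t (a, x)) && (path_last s0 (rcons t (a, x)) == s')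
     then wp sg (rcons zs z) s0 (rcons t (a, x)) else 0)).
    by rewrite pair_big; apply: eq_bigr => -[a x] _.
  rewrite [RHS](bigD1 (path_last s0 t)) //= [X in _ + X]big1 ?addr0; last first.
    move=> s Hs'; apply: big1 => a _.
    by rewrite [path_last s0 t == s]eq_sym (negbTE Hs') andbF !mul0r.
  apply: eq_bigr => a _.
  rewrite [LHS](bigD1 s') //= [X in _ + X]big1 ?addr0; last first.
    by move=> x Hx; rewrite path_last_rcons /= (negbTE Hx) andbF.
  rewrite path_last_rcons /= !eqxx !andbT is_path_rcons /wp path_prob_rcons tgp_rcons //.
  case Hp: (is_path M s0 t) => /=; last by rewrite !mul0r.
  case Ha: (avail M (path_last s0 t) a) => /=; last first.
    by case: (Hs s0 t) => _ H; rewrite H ?Ha // !mulr0 !mul0r.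
  case: ltrP => HT.
    by ring.
  have -> : trans M (path_last s0 t) a s' = 0.
    by apply/eqP; rewrite eq_le HT trans_ge0.
  by rewrite !mulr0 mul0r.
rewrite /fwd ffunE size_rcons.
under eq_bigr => s0 _ do rewrite sumT_S.
under eq_bigr => s0 _ do rewrite (eq_sumT (key s0)).
rewrite /W /sumT.
transitivity (\sum_(s : S) \sum_(a : Act) \sum_(s0 : S) \sum_(t : (size zs).-tuple (Act * S))
   (if is_path M s0 t && (path_last s0 t == s) then wp sg zs s0 t * sg s0 t a else 0) * trans M s a s' * obs M s' z); last first.
  apply: eq_bigr => s _; apply: eq_bigr => a _.
  rewrite mulr_suml mulr_suml; apply: eq_bigr => s0 _.
  by rewrite mulr_suml mulr_suml.
rewrite exchange_big /=.
under eq_bigr => a _ do rewrite exchange_big /=.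
rewrite exchange_big /=; apply: eq_bigr => s0 _.
under eq_bigr => a _ do rewrite exchange_big /=.
rewrite exchange_big /=; apply: eq_bigr => t _.
by rewrite exchange_big.
Qed.

Lemma sum_if_last (l : S) (P : bool) (f : S -> R) :
  \sum_(s : S) (if P && (l == s) then f s else 0) = if P then f l else 0.
Proof.
rewrite (bigD1 l) //= eqxx andbT big1 ?addr0 // => s Hs.
by rewrite eq_sym (negbTE Hs) andbF.
Qed.

Lemma fwd_nil sg : fwd sg [::] = x0.
Proof.
apply/ffunP => s'; rewrite /fwd !ffunE /=.
under eq_bigr => s0 _ do rewrite sumT0.
rewrite /path_last /= (bigD1 s') //= eqxx andbT big1 ?addr0; last first.
  by move=> s Hs; rewrite (negbTE Hs) andbF.
rewrite /is_path /= andbT /wp /path_prob /trace_given_path /= big_nil !mulr1.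
case: ltrP => // H.
have -> : Defs.iota M s' = 0.
  by apply/eqP; rewrite eq_le H; case: (iota_distr M) => H0 _; apply: H0.
by rewrite mul0r.
Qed.

Lemma trace_prob_fwd sg zs : trace_prob M sg z0 zs = \sum_(s : S) fwd sg zs s.
Proof.
rewrite /trace_prob /fwd.
under [RHS]eq_bigr do rewrite ffunE.
rewrite /sumT exchange_big /=; apply: eq_bigr => s0 _.
rewrite exchange_big /= big_mkcond /=; apply: eq_bigr => t _.
by rewrite sum_if_last.
Qed.

Definition belief_risk' (r : S -> R) (b : belief) := \sum_(s : S) b s * r s.

Lemma sched_risk_fwd r sg zs :
  sched_risk M r sg z0 zs = belief_risk r (normalize (fwd sg zs)).
Proof.
rewrite /sched_risk /path_given_trace /belief_risk.
transitivity (\sum_(s0 : S) \sum_(t : (size zs).-tuple (Act * S)) \sum_(s : S)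
  (if is_path M s0 t && (path_last s0 t == s) then wp sg zs s0 t * r s / trace_prob M sg z0 zs else 0)).
  apply: eq_bigr => s0 _; rewrite big_mkcond /=; apply: eq_bigr => t _.
  rewrite sum_if_last; case: ifP => // _.
  by rewrite /wp mulrAC [trace_given_path _ _ _ _ _ * _]mulrC.
rewrite [LHS]exchange_big /=; under eq_bigr => t _ do rewrite exchange_big /=.
rewrite [LHS]exchange_big /=. refine (eq_bigr _ _).
move=> s _; rewrite trace_prob_fwd /normalize ffunE.
move: (\sum_u fwd sg zs u) => T.
rewrite /fwd ffunE mulrAC !mulr_suml [LHS]exchange_big /=; apply eq_bigr => s0 _.
rewrite /sumT mulr_suml mulr_suml; apply eq_bigr => t _.
by case: ifP => _; rewrite ?mul0r.
Qed.

Lemma fwd_ge0 sg zs : is_scheduler M sg -> nonneg (fwd sg zs).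
Proof.
move=> Hs s'; rewrite /fwd ffunE; apply: sumr_ge0 => s0 _; apply: sumr_ge0 => t _.
by case: ifP => // /andP [Hp _]; apply: wp_ge0.
Qed.

Lemma W_ge0 sg zs s a : is_scheduler M sg -> 0 <= W sg zs s a.
Proof.
move=> Hs; apply: sumr_ge0 => s0 _; apply: sumr_ge0 => t _.
by case: ifP => // /andP [Hp _]; rewrite mulr_ge0 ?wp_ge0 ?sg_ge0.
Qed.

Lemma W_sum sg zs s : is_scheduler M sg -> \sum_(a : Act) W sg zs s a = fwd sg zs s.
Proof.
move=> Hs; rewrite /W /fwd ffunE exchange_big /=; apply: eq_bigr => s0 _.
rewrite /sumT exchange_big /=; apply: eq_bigr => t _.
case: ifP => _; last by rewrite big1.
by rewrite -mulr_sumr; case: (Hs s0 t) => [[_ ->] _]; rewrite mulr1.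
Qed.

Lemma W_avail sg zs s a : is_scheduler M sg -> ~~ avail M s a -> W sg zs s a = 0.
Proof.
move=> Hs Ha; apply: big1 => s0 _; apply: big1 => t _.
case: ifP => // /andP [_ /eqP Hl].
by case: (Hs s0 t) => _ H; rewrite H ?mulr0 // Hl.
Qed.

Definition pick_act (s : S) : Act := xchoose (avail_nonempty M s).

Lemma pick_actP s : avail M s (pick_act s).
Proof. exact: xchooseP. Qed.

Definition dflt (s : S) (a : Act) : R := (a == pick_act s)%:R.

Lemma dflt_valid : valid_vs dflt.
Proof.
move=> s; split; first split.
- by move=> a; rewrite /dflt ler0n.
- rewrite (bigD1 (pick_act s)) //= /dflt eqxx big1 ?addr0 // => a Ha.
  by rewrite (negbTE Ha).
- move=> a Ha; rewrite /dflt; case: eqP => // E.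
  by move: Ha; rewrite E pick_actP.
Qed.

Definition avg sg zs (s : S) (a : Act) : R :=
  if fwd sg zs s == 0 then dflt s a else W sg zs s a / fwd sg zs s.

Lemma avg_valid sg zs : is_scheduler M sg -> valid_vs (avg sg zs).
Proof.
move=> Hs s; rewrite /avg; case: eqP => E; first by apply: dflt_valid.
split; first split.
- by move=> a; rewrite divr_ge0 ?W_ge0 ?fwd_ge0.
- by rewrite -mulr_suml W_sum // mulfV //; apply/eqP.
- by move=> a Ha; rewrite W_avail // mul0r.
Qed.

Lemma W_avg sg zs s a : is_scheduler M sg -> W sg zs s a = fwd sg zs s * avg sg zs s a.
Proof.
move=> Hs; rewrite /avg; case: eqP => E.
  rewrite E mul0r.
  have : \sum_(a : Act) W sg zs s a == 0 by rewrite W_sum // E.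
  rewrite psumr_eq0; last by move=> a' _; apply: W_ge0.
  by move/allP => H; apply/eqP; apply: H; rewrite mem_index_enum.
by rewrite mulrC -mulrA mulVf ?mulr1 //; apply/eqP.
Qed.

Lemma lemmaA sg zs : is_scheduler M sg -> est M z0 zs (normalize (fwd sg zs)).
Proof.
move=> Hs; elim/last_ind: zs => [|zs z IH].
  by apply/est_nil; rewrite fwd_nil.
apply/est_rcons; exists (normalize (fwd sg zs)); split => //.
apply/est_up_eq; exists (avg sg zs); split; first by apply: avg_valid.
rewrite normalize_stepN; last by apply: fwd_ge0.
congr normalize.
apply/ffunP => s'; rewrite fwd_rcons // ffunE; apply: eq_bigr => s _.
rewrite mulr_sumr; apply: eq_bigr => a _.
by rewrite W_avg // !mulrA.
Qed.

Lemma aux_ext sg sg' s0 pre (cur : S) t :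
  (forall st, (size st < size pre + size t)%N -> sg s0 st = sg' s0 st) ->
  path_prob_aux M sg s0 pre cur t = path_prob_aux M sg' s0 pre cur t.
Proof.
elim: t pre cur => [|[a x] t IH] pre cur H //=.
rewrite H ?addnS ?ltnS ?leq_addr // (IH (rcons pre (a, x)) x) // => st Hst.
by apply: H; rewrite addnS -addSn -(size_rcons pre (a, x)).
Qed.

Lemma wp_ext sg sg' zs s0 t : size t = size zs ->
  (forall s0 st, (size st < size zs)%N -> sg s0 st = sg' s0 st) ->
  wp sg zs s0 t = wp sg' zs s0 t.
Proof.
move=> Ht H; rewrite /wp /path_prob (@aux_ext sg sg') // => st.
by rewrite add0n Ht; apply: H.
Qed.

Definition sg0 : scheduler R S Act := fun s0 st a => dflt (path_last s0 st) a.

Lemma sched_ext (sg' : scheduler R S Act) n vs :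
  is_scheduler M sg' -> valid_vs vs ->
  is_scheduler M (fun s0 st => if (size st < n)%N then sg' s0 st else vs (path_last s0 st)).
Proof.
move=> Hs Hv s0 st; case: ifP => _; first by apply: Hs.
by apply: Hv.
Qed.

Lemma sg0_ok : is_scheduler M sg0.
Proof. by move=> s0 st; apply: dflt_valid. Qed.

Lemma lemmaB zs b : est M z0 zs b -> exists sg, is_scheduler M sg /\ normalize (fwd sg zs) = b.
Proof.
elim/last_ind: zs b => [|zs z IH] b.
  by move/est_nil => ->; exists sg0; split; [apply: sg0_ok | rewrite fwd_nil].
case/est_rcons => b' [/IH [sg' [Hs' Hb']] /est_up_eq [vs [Hv ->]]].
set sg := (fun s0 st => if (size st < size zs)%N then sg' s0 st else vs (path_last s0 st)).
have Hs : is_scheduler M sg by apply: sched_ext.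
exists sg; split => //.
rewrite -Hb' normalize_stepN; last by apply: fwd_ge0.
congr normalize.
apply/ffunP => s'; rewrite fwd_rcons // ffunE; apply: eq_bigr => s _.
rewrite mulr_sumr; apply: eq_bigr => a _.
have -> : W sg zs s a = fwd sg' zs s * vs s a.
  rewrite /W /fwd ffunE mulr_suml; apply: eq_bigr => s0 _.
  rewrite /sumT mulr_suml; apply: eq_bigr => t _.
  case: ifP => [/andP [_ /eqP Hl]|_]; last by rewrite mul0r.
  rewrite (@wp_ext sg sg') ?size_tuple //; last first.
    by move=> s1 st Hst; rewrite /sg Hst.
  by rewrite /sg size_tuple ltnn Hl.
by rewrite !mulrA.
Qed.

Definition inconv (F : seq belief) (b : belief) :=
  exists (I : finType) (w : I -> R) (c : I -> belief),
    (forall i, 0 <= w i) /\ \sum_i w i = 1 /\ (forall i, c i \in F) /\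
    (forall s, b s = \sum_i w i * c i s).

Definition vsd (d : {ffun S -> Act}) (s : S) (a : Act) : R :=
  if avail M s (d s) then (a == d s)%:R else dflt s a.

Lemma vsd_valid d : valid_vs (vsd d).
Proof.
move=> s; rewrite /vsd; case Ha: (avail M s (d s)); last by apply: dflt_valid.
split; first split.
- by move=> a; rewrite ler0n.
- rewrite (bigD1 (d s)) //= eqxx big1 ?addr0 // => a Hb.
  by rewrite (negbTE Hb).
- move=> a Hb; case: eqP => // E.
  by move: Hb; rewrite E Ha.
Qed.

Definition pi (vs : S -> Act -> R) (d : {ffun S -> Act}) : R := \prod_(u : S) vs u (d u).

Lemma multilin (vs : S -> Act -> R) (G : Act -> R) s0 :
  (forall u, \sum_(a : Act) vs u a = 1) ->
  \sum_(d : {ffun S -> Act}) pi vs d * G (d s0) = \sum_(a : Act) vs s0 a * G a.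
Proof.
move=> H1.
pose H u a := if u == s0 then vs u a * G a else vs u a.
transitivity (\prod_(u : S) \sum_(a : Act) H u a); last first.
  rewrite (bigD1 s0) //= [X in _ * X]big1 ?mulr1.
    by apply: eq_bigr => a _; rewrite /H eqxx.
  move=> u Hu; rewrite -(H1 u); apply: eq_bigr => a _.
  by rewrite /H (negbTE Hu).
rewrite bigA_distr_bigA /=; apply: eq_bigr => d _.
rewrite /pi (bigD1 s0) //= [in RHS](bigD1 s0) //= /H eqxx mulrAC.
congr (_ * _); apply: eq_bigr => u Hu.
by rewrite (negbTE Hu).
Qed.

Lemma stepN_expand x vs z s' : valid_vs vs ->
  stepN x vs z s' = \sum_(d : {ffun S -> Act}) pi vs d * stepN x (vsd d) z s'.
Proof.
move=> Hv.
have E : forall d, pi vs d * stepN x (vsd d) z s' =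
   pi vs d * \sum_(s : S) x s * (trans M s (d s) s' * obs M s' z).
  move=> d; case: (boolP [forall s, avail M s (d s)]) => [/forallP Ha | /forallPn [s Hs]].
    congr (_ * _); rewrite ffunE; apply: eq_bigr => s _; congr (_ * _).
    rewrite (bigD1 (d s)) //= /vsd Ha eqxx mul1r big1 ?addr0 ?mulrA //.
    by move=> a Hna; rewrite (negbTE Hna) !mul0r.
  have -> : pi vs d = 0.
    by rewrite /pi (bigD1 s) //= (proj2 (Hv s)) // mul0r.
  by rewrite !mul0r.
under eq_bigr do rewrite E.
rewrite ffunE.
under [RHS]eq_bigr => d _ do rewrite mulr_sumr.
rewrite [RHS]exchange_big /=; apply: eq_bigr => s _.
under [RHS]eq_bigr => d _ do rewrite mulrCA.
rewrite -mulr_sumr; congr (_ * _).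
rewrite (multilin (fun a => trans M s a s' * obs M s' z)).
  by apply: eq_bigr => a _; rewrite mulrA.
by move=> u; case: (Hv u) => [[_ ->]].
Qed.

Lemma stepN_lin (I : finType) (w : I -> R) (c : I -> belief) (b : belief) vs z s' :
  (forall s, b s = \sum_i w i * c i s) ->
  stepN b vs z s' = \sum_i w i * stepN (c i) vs z s'.
Proof.
move=> H; rewrite ffunE.
under eq_bigr do rewrite H mulr_suml.
rewrite exchange_big /=; apply: eq_bigr => i _.
rewrite ffunE mulr_sumr; apply: eq_bigr => s _.
by rewrite mulrA.
Qed.

Lemma normcomb (I : finType) (al : I -> R) (y : I -> belief) :
  (forall i, 0 <= al i) -> (forall i, nonneg (y i)) ->
  normalize [ffun s => \sum_i al i * y i s] = 0 \/
  exists w : I -> R, (forall i, 0 <= w i) /\ \sum_i w i = 1 /\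
    forall s, normalize [ffun s => \sum_i al i * y i s] s = \sum_i w i * normalize (y i) s.
Proof.
move=> Hal Hy.
set Y := [ffun s => \sum_i al i * y i s].
have Htot : \sum_s Y s = \sum_i al i * \sum_s y i s.
  under eq_bigr do rewrite ffunE.
  rewrite exchange_big /=; apply: eq_bigr => i _; by rewrite mulr_sumr.
have [E|E] := eqVneq (\sum_s Y s) 0.
  by left; apply/ffunP => s; rewrite !ffunE E invr0 mulr0.
right; exists (fun i => al i * (\sum_s y i s) / \sum_s Y s); split; [|split].
- move=> i; apply: divr_ge0; first by apply: mulr_ge0 => //; apply: sum_ge0.
  apply: sum_ge0 => s; rewrite ffunE; apply: sumr_ge0 => j _; apply: mulr_ge0 => //.
  exact: Hy.
- by rewrite -mulr_suml -Htot mulfV.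
- move=> s; rewrite /normalize [in LHS]ffunE.
  rewrite {1}/Y ffunE mulr_suml; apply: eq_bigr => i _.
  rewrite ffunE.
  have [Ei|Ei] := eqVneq (\sum_s y i s) 0.
    have Hys : y i s = 0 by rewrite (nonneg_sum0 (Hy i) Ei) ffunE.
    by rewrite Hys Ei !(mulr0, mul0r).
  by field; apply/andP; split.
Qed.

Definition d0 : {ffun S -> Act} := [ffun s => pick_act s].

Lemma lemmaC zs : exists F : seq belief,
  (forall f, f \in F -> est M z0 zs f) /\ F != [::] /\
  forall b, est M z0 zs b -> b = 0 \/ inconv F b.
Proof.
elim/last_ind: zs => [|zs z [F [HF [HFn Hcov]]]].
  exists [:: normalize x0]; split; [|split] => //.
    by move=> f; rewrite inE => /eqP ->; apply/est_nil.
  move=> b /est_nil ->; right.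
  exists 'I_1, (fun _ => 1), (fun _ => normalize x0); split; [|split; [|split]].
  - by move=> _; rewrite ler01.
  - by rewrite big_ord1.
  - by move=> _; rewrite inE.
  - by move=> s; rewrite big_ord1 mul1r.
exists [seq normalize (stepN f (vsd d) z) | f <- F, d <- enum {ffun S -> Act}].
split; [|split].
- move=> f' /allpairsP [[f d] [Hf _ ->]] /=.
  apply/est_rcons; exists f; split; first by apply: HF.
  by apply/est_up_eq; exists (vsd d); split => //; apply: vsd_valid.
- case: F HF HFn Hcov => [|f F] // _ _ _.
  apply/eqP => E.
  have := @allpairs_f _ _ _ (fun f d => normalize (stepN f (vsd d) z)) (f :: F)
    (enum {ffun S -> Act}) f d0.
  by rewrite E inE eqxx mem_enum => /(_ isT isT).
move=> b /est_rcons [b' [Hb' /est_up_eq [vs [Hv ->]]]].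
case: (Hcov b' Hb') => [->|[I [w [c [Hw [Hw1 [Hc Hb]]]]]]].
  by left; rewrite stepN0 normalize0.
have Hcn : forall i, nonneg (c i).
  by move=> i; case: (est_inv (HF _ (Hc i))).
have Hy : forall p : I * {ffun S -> Act}, nonneg (stepN (c p.1) (vsd p.2) z).
  by move=> p; apply: stepN_ge0 => //; apply: vsd_valid.
have Hal : forall p : I * {ffun S -> Act}, 0 <= w p.1 * pi vs p.2.
  move=> p; rewrite mulr_ge0 // /pi prodr_ge0 // => u _.
  by case: (Hv u) => [[H _] _]; apply: H.
have Est : stepN b' vs z = [ffun s' => \sum_(p : I * {ffun S -> Act})
     (w p.1 * pi vs p.2) * stepN (c p.1) (vsd p.2) z s'].
  apply/ffunP => s'; rewrite [RHS]ffunE (stepN_lin _ _ _ Hb) -(pair_bigA _ (fun i d => w i * pi vs d * stepN (c i) (vsd d) z s')) /=.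
  apply: eq_bigr => i _; rewrite (stepN_expand _ _ _ Hv) mulr_sumr.
  by apply: eq_bigr => d _; rewrite mulrA.
rewrite Est.
case: (normcomb Hal Hy) => [->|[w' [Hw' [Hw1' Hs]]]]; first by left.
right; exists (I * {ffun S -> Act})%type, w',
  (fun p => normalize (stepN (c p.1) (vsd p.2) z)); split; [|split; [|split]] => //.
by move=> [i d]; apply: allpairs_f => //; rewrite mem_enum.
Qed.

Fixpoint lexle (u v : seq R) : bool :=
  match u, v with
  | x :: u', y :: v' => (x < y) || ((x == y) && lexle u' v')
  | _, _ => true
  end.

Lemma lexle_refl u : lexle u u.
Proof. by elim: u => //= x u ->; rewrite eqxx orbT. Qed.

Lemma lexle_total u v : lexle u v || lexle v u.
Proof.
elim: u v => [|x u IH] [|y v] //=.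
case: (ltrgtP x y) => //= _; by rewrite IH.
Qed.

Lemma lexle_trans u v w : size u = size v -> size v = size w ->
  lexle u v -> lexle v w -> lexle u w.
Proof.
elim: u v w => [|x u IH] [|y v] [|z w] //= [Huv] [Hvw].
case/orP => [Hxy|/andP [/eqP <- H1]]; case/orP => [Hyz|/andP [/eqP Eyz H2]].
- by rewrite (lt_trans Hxy Hyz).
- by rewrite -Eyz Hxy.
- by rewrite Hyz.
- by rewrite Eyz eqxx (IH v w) ?orbT.
Qed.

Lemma lexmax (F : seq belief) (key : belief -> seq R) :
  (forall b b', size (key b) = size (key b')) -> F != [::] ->
  exists2 m, m \in F & forall f, f \in F -> lexle (key f) (key m).
Proof.
move=> Hsz; elim: F => [|f F IH] // _.
case: F IH => [|f' F] IH.
  by exists f; rewrite ?inE // => g; rewrite inE => /eqP ->; apply: lexle_refl.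
have [m' Hm' Hmax] := IH isT.
case/orP: (lexle_total (key f) (key m')) => H.
  exists m'; first by rewrite inE Hm' orbT.
  by move=> g; rewrite inE => /orP [/eqP ->|]; [|apply: Hmax].
exists f; first by rewrite inE eqxx.
move=> g; rewrite inE => /orP [/eqP ->|Hg]; first by apply: lexle_refl.
by apply: (lexle_trans (Hsz _ _) (Hsz _ _) (Hmax _ Hg) H).
Qed.

Definition keyL (L : seq (belief -> R)) (b : belief) := [seq phi b | phi <- L].

Definition linphi (phi : belief -> R) := forall (I : finType) (w : I -> R) (c : I -> belief),
  phi [ffun s => \sum_i w i * c i s] = \sum_i w i * phi (c i).

Fixpoint AllL (P : (belief -> R) -> Prop) (L : seq (belief -> R)) : Prop :=
  if L is phi :: L' then P phi /\ AllL P L' else True.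

Lemma AllL_map P (T : Type) (f : T -> belief -> R) s : (forall x, P (f x)) -> AllL P (map f s).
Proof. by move=> H; elim: s => //= x s ->; split. Qed.

Lemma lexconv L (I : finType) (w : I -> R) (c : I -> belief) m :
  AllL linphi L -> (forall i, 0 <= w i) -> \sum_i w i = 1 ->
  (forall i, lexle (keyL L (c i)) (keyL L m)) ->
  lexle (keyL L [ffun s => \sum_i w i * c i s]) (keyL L m) /\
  (lexle (keyL L m) (keyL L [ffun s => \sum_i w i * c i s]) ->
     forall i, 0 < w i -> keyL L (c i) = keyL L m).
Proof.
elim: L c => [|phi L IH] c /=; first by [].
move=> [Hphi HL] Hw Hw1 Hc.
have Hle : forall i, phi (c i) <= phi m.
  by move=> i; case/orP: (Hc i) => [/ltW|/andP [/eqP -> _]].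
set comb := [ffun s => \sum_i w i * c i s].
have Hcomb : phi comb = \sum_i w i * phi (c i) by apply: Hphi.
have Hcm : phi comb <= phi m.
  rewrite Hcomb; apply: le_trans (_ : \sum_i w i * phi m <= _).
    by apply: ler_sum => i _; apply: ler_wpM2l.
  by rewrite -mulr_suml Hw1 mul1r.
case: (ltrP (phi comb) (phi m)) => Hlt.
  split; first by rewrite /= ?Hlt.
  case/orP => [H|/andP [/eqP H _]].
    by move: (lt_trans H Hlt); rewrite ltxx.
  by move: Hlt; rewrite H ltxx.
have Heq : phi comb = phi m by apply/eqP; rewrite eq_le Hcm Hlt.
have Hi : forall i, 0 < w i -> phi (c i) = phi m.
  have : \sum_i w i * (phi m - phi (c i)) == 0.
    under eq_bigr do rewrite mulrBr.
    by rewrite sumrB -mulr_suml Hw1 mul1r -Hcomb Heq subrr.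
  rewrite psumr_eq0; last by move=> i _; rewrite mulr_ge0 // subr_ge0.
  move/allP => H i Hwi; have := H i (mem_index_enum _).
  rewrite mulf_eq0 (gt_eqF Hwi) /= subr_eq0 => /eqP ->. by [].
pose c' i := if 0 < w i then c i else m.
have Hcomb' : [ffun s => \sum_i w i * c' i s] = comb.
  apply/ffunP => s; rewrite !ffunE; apply: eq_bigr => i _; rewrite /c'.
  case: ifP => // Hwi.
  have -> : w i = 0 by apply/eqP; rewrite eq_le Hw andbT leNgt Hwi.
  by rewrite !mul0r.
have Hc' : forall i, lexle (keyL L (c' i)) (keyL L m).
  move=> i; rewrite /c'; case: ifP => Hwi; last by apply: lexle_refl.
  case/orP: (Hc i) => [|/andP [_ //]].
  by rewrite Hi // ltxx.
have [IH1 IH2] := IH c' HL Hw Hw1 Hc'.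
rewrite Hcomb' in IH1 IH2.
split; first by rewrite Heq eqxx IH1 orbT.
case/orP => [H|/andP [_ H]].
  by move: H; rewrite Heq ltxx.
move=> i Hwi; have := IH2 H i Hwi; rewrite /c' Hwi => ->.
by rewrite Hi.
Qed.

Lemma lexle0 L m : AllL (fun phi => phi 0 = 0 /\ 0 <= phi m) L ->
  lexle (keyL L 0) (keyL L m).
Proof.
elim: L => //= phi L IH [[-> Hm] HL].
case: (ltrP 0 (phi m)) => //= H.
have -> : phi m = 0 by apply/eqP; rewrite eq_le H Hm.
by rewrite eqxx IH.
Qed.

Lemma main (zs : seq Z) (r : S -> R) (r_ge0 : forall s, 0 <= r s) :
  (exists bel, vertices (est M z0 zs) bel /\ risk M r z0 zs = belief_risk r bel) /\
  (forall bel, vertices (est M z0 zs) bel -> belief_risk r bel <= risk M r z0 zs).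
Proof.
have [F [HF [HFn Hcov]]] := lemmaC zs.
set L := belief_risk r :: [seq (fun b : belief => b s) | s <- enum S].
have Hlin : AllL linphi L.
  split.
    move=> I w c; rewrite /belief_risk.
    under eq_bigr do rewrite ffunE mulr_suml.
    rewrite exchange_big /=; apply: eq_bigr => i _.
    by rewrite mulr_sumr; apply: eq_bigr => s _; rewrite mulrA.
  by apply: AllL_map => s I w c; rewrite ffunE.
have Hsz : forall b b', size (keyL L b) = size (keyL L b') by move=> b b'; rewrite !size_map.
have [m Hm Hmax] := lexmax Hsz HFn.
have Hmest := HF m Hm.
have [Hmnn _] := est_inv Hmest.
have Hdom : forall b, est M z0 zs b -> lexle (keyL L b) (keyL L m).
  move=> b /Hcov [->|[I [w [c [Hw [Hw1 [Hc Hb]]]]]]].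
    apply: lexle0; split.
      split; first by rewrite /belief_risk big1 // => s _; rewrite ffunE mul0r.
      by apply: sumr_ge0 => s _; apply: mulr_ge0.
    by apply: AllL_map => s; rewrite ffunE.
  have -> : b = [ffun s => \sum_i w i * c i s] by apply/ffunP => s; rewrite ffunE Hb.
  by case: (lexconv Hlin Hw Hw1 (fun i => Hmax _ (Hc i))).
have Hrisk : forall b, est M z0 zs b -> belief_risk r b <= belief_risk r m.
  move=> b /Hdom; rewrite /keyL /= => /orP [/ltW //|/andP [/eqP -> _]] //.
have Hsup : risk M r z0 zs = belief_risk r m.
  rewrite /risk.
  set E := [set x : R | exists sigma, is_scheduler M sigma /\ x = sched_risk M r sigma z0 zs]%classic.
  have ub : forall x, E x -> x <= belief_risk r m.
    move=> x [sg [Hs ->]]; rewrite sched_risk_fwd; apply: Hrisk.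
    by apply: lemmaA.
  have mem : E (belief_risk r m).
    have [sg [Hs Hsg]] := lemmaB Hmest.
    by exists sg; split => //; rewrite sched_risk_fwd Hsg.
  apply/eqP; rewrite eq_le; apply/andP; split.
    by apply: ge_sup; [exists (belief_risk r m) | move=> y /ub].
  have Hhs : has_sup E by split; [exists (belief_risk r m) | exists (belief_risk r m) => y /ub].
  exact: (sup_upper_bound Hhs) _ mem.
split; last first.
  by move=> bel [Hb _]; rewrite Hsup; apply: Hrisk.
exists m; split => //; split => // [[n [w [c [Hw [Hw1 [Hc Hmc]]]]]]].
have Hm' : m = [ffun s => \sum_i w i * c i s] by apply/ffunP => s; rewrite ffunE Hmc.
have [_ H2] := lexconv Hlin Hw Hw1 (fun i => Hdom _ (proj1 (Hc i))).
rewrite -Hm' in H2.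
have H2' := H2 (lexle_refl _).
case: (pickP (fun i => 0 < w i)) => [i Hi|H0]; last first.
  have : \sum_i w i = 0.
    by apply: big1 => i _; apply/eqP; rewrite eq_le Hw andbT leNgt H0.
  by rewrite Hw1 => /eqP; rewrite oner_eq0.
have := H2' i Hi; rewrite /keyL /= => -[_ Hk].
rewrite -!map_comp in Hk.
apply: (proj2 (Hc i)); apply/ffunP => s.
move/eq_in_map: Hk => Hk; apply: Hk.
by rewrite -enumT mem_enum.
Qed.

End P.

Theorem theorem2 (R : realType) (S Act Z : finType) (M : MDP R S Act Z)
    (z0 : Z) (zs : seq Z) (r : S -> R) (r_ge0 : forall s, 0 <= r s) :
  (exists bel, vertices (est M z0 zs) bel /\ risk M r z0 zs = belief_risk r bel) /\
  (forall bel, vertices (est M z0 zs) bel -> belief_risk r bel <= risk M r z0 zs).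
Proof. exact: main. Qed.
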